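(* Let $\alpha\in\mathbb{R}\setminus\mathbb{Q}$ with continued fraction convergents $p_s/q_s$, let $n$ be an integer with $q_s\leq n<q_{s+1}$, and let $0\leq m\leq n$ be an integer. Then $$D_\alpha(m)\,D_\alpha(n-m)\geq 2^{-n}\,n^{-2n}\,q_{s+1}^{-n/q_s}.$$
   Context: $D_\alpha(n)=\prod_{k=1}^n\operatorname{dist}(k\alpha,\mathbb{Z})$, with $D_\alpha(0)=1$ (empty product). Continued fractions: $\alpha=[a_0;a_1,a_2,\dots]$ with integers $a_j\geq1$ for $j\geq1$; convergents $p_s/q_s=[a_0;a_1,\dots,a_s]$ with $p_s=a_sp_{s-1}+p_{s-2}$, $q_s=a_sq_{s-1}+q_{s-2}$ for $s\geq1$, $p_0=a_0$, $q_0=1$, $p_{-1}=1$, $q_{-1}=0$. *)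

(* Defs.v *)
From Stdlib Require Import Reals Lra Lia ZArith.
Open Scope R_scope.

(* floor x : Int_part x is the greatest integer <= x (Stdlib: up x - 1). *)
Definition distZ (x : R) : R :=
  Rmin (x - IZR (Int_part x)) (IZR (Int_part x) + 1 - x).

Fixpoint Dprod (alpha : R) (n : nat) : R :=
  match n with
  | O => 1
  | S k => Dprod alpha k * distZ (INR (S k) * alpha)
  end.

Fixpoint cf_rem (alpha : R) (j : nat) : R :=
  match j with
  | O => alpha
  | S k => / (cf_rem alpha k - IZR (Int_part (cf_rem alpha k)))
  end.

Definition cf_a (alpha : R) (j : nat) : Z := Int_part (cf_rem alpha j).

(* (q_s, q_{s-1}) with q_0 = 1, q_{-1} = 0, q_s = a_s q_{s-1} + q_{s-2} *)
Fixpoint cf_qpair (alpha : R) (s : nat) : Z * Z :=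
  match s with
  | O => (1%Z, 0%Z)
  | S k => let (q, q') := cf_qpair alpha k in
           ((cf_a alpha (S k) * q + q')%Z, q)
  end.

Definition cf_q (alpha : R) (s : nat) : Z := fst (cf_qpair alpha s).

(* Main.v *)
Require Import Defs.
From Stdlib Require Import Reals Lra Lia ZArith.
Open Scope R_scope.

Fixpoint st (a : R) (j : nat) : Z * Z * Z * Z :=
  match j with
  | O => (1%Z, 0%Z, Int_part a, 1%Z)
  | S k => let '(q, q', p, p') := st a k in
           let c := cf_a a (S k) in ((c * q + q')%Z, q, (c * p + p')%Z, p)
  end.

Definition Qj a j := fst (fst (fst (st a j))).
Definition Q'j a j := snd (fst (fst (st a j))).
Definition Pj a j := snd (fst (st a j)).
Definition P'j a j := snd (st a j).

Lemma st_S a j : Qj a (S j) = (cf_a a (S j) * Qj a j + Q'j a j)%Z /\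
  Q'j a (S j) = Qj a j /\ Pj a (S j) = (cf_a a (S j) * Pj a j + P'j a j)%Z /\
  P'j a (S j) = Pj a j.
Proof. unfold Qj, Q'j, Pj, P'j; simpl. destruct (st a j) as [[[x y] z] w]; simpl; tauto. Qed.

Lemma cfq_eq a j : cf_qpair a j = (Qj a j, Q'j a j).
Proof.
  induction j as [|j IH]; [reflexivity|].
  simpl. rewrite IH. destruct (st_S a j) as [H1 [H2 _]]. rewrite H1, H2. reflexivity.
Qed.

Definition dl a j := IZR (Qj a j) * a - IZR (Pj a j).
Definition dl' a j := IZR (Q'j a j) * a - IZR (P'j a j).

Definition Irr a := ~ exists (p q : Z), q <> 0%Z /\ a = IZR p / IZR q.

Definition Inv a j :=
  (1 <= Qj a j)%Z /\ (0 <= Q'j a j)%Z /\ (Q'j a j <= Qj a j)%Z /\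
  ((Pj a j * Q'j a j - P'j a j * Qj a j = 1)%Z \/ (Pj a j * Q'j a j - P'j a j * Qj a j = -1)%Z) /\
  dl a j <> 0 /\ 1 < cf_rem a (S j) /\ dl' a j = - cf_rem a (S j) * dl a j.

Lemma irr_nz a p q : Irr a -> (1 <= q)%Z -> IZR q * a - IZR p <> 0.
Proof.
  intros Hi Hq H. apply Hi. exists p, q. split; [lia|].
  assert (IZR q <> 0) by (apply not_0_IZR; lia).
  assert (E : IZR p = IZR q * a) by lra. rewrite E. field. auto.
Qed.

Lemma Inv_all a : Irr a -> forall j, Inv a j.
Proof.
  intros Hi j. induction j as [|j IH].
  - unfold Inv, dl, dl'.
    replace (Qj a 0) with 1%Z by reflexivity. replace (Q'j a 0) with 0%Z by reflexivity.
    replace (Pj a 0) with (Int_part a) by reflexivity. replace (P'j a 0) with 1%Z by reflexivity.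
    replace (cf_rem a 1) with (/ (a - IZR (Int_part a))) by reflexivity.
    destruct (base_Int_part a) as [B1 B2].
    assert (Hnz : IZR 1 * a - IZR (Int_part a) <> 0) by (apply (irr_nz a _ 1%Z); [exact Hi | lia]).
    assert (Hf : 0 < a - IZR (Int_part a) < 1).
    { split; [|lra]. destruct (Rle_lt_dec (a - IZR (Int_part a)) 0); [|lra].
      exfalso; apply Hnz; simpl; lra. }
    split; [lia|]. split; [lia|]. split; [lia|]. split; [right; ring|].
    split; [exact Hnz|]. split.
    + rewrite <- Rinv_1. apply Rinv_lt_contravar; lra.
    + simpl. field. lra.
  - destruct IH as [H1 [H2 [H3 [H4 [H5 [H6 H7]]]]]].
    destruct (st_S a j) as [E1 [E2 [E3 E4]]].
    set (x := cf_rem a (S j)) in *.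
    assert (Hc : cf_a a (S j) = Int_part x) by reflexivity.
    destruct (base_Int_part x) as [B1 B2].
    set (c := Int_part x) in *.
    assert (Hc1 : (1 <= c)%Z).
    { assert (0 < IZR c) by lra. apply lt_0_IZR in H. lia. }
    assert (Hd : dl a (S j) = - (x - IZR c) * dl a j).
    { unfold dl. rewrite E1, E3, Hc. rewrite !plus_IZR, !mult_IZR.
      unfold dl' in H7. unfold dl in *. lra. }
    assert (Hq1 : (1 <= Qj a (S j))%Z) by (rewrite E1, Hc; nia).
    assert (Hnz : dl a (S j) <> 0) by (apply irr_nz; auto).
    assert (Hf : 0 < x - IZR c < 1).
    { split; [|lra]. destruct (Rle_lt_dec (x - IZR c) 0); [|lra].
      exfalso. apply Hnz. rewrite Hd. replace (x - IZR c) with 0 by lra. ring. }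
    assert (Hx2 : cf_rem a (S (S j)) = / (x - IZR c)) by reflexivity.
    unfold Inv. rewrite Hx2.
    split; [exact Hq1|]. split; [rewrite E2; lia|]. split; [rewrite E1, E2, Hc; nia|].
    split; [rewrite E1, E2, E3, E4, Hc; destruct H4; [right|left]; nia|].
    split; [exact Hnz|]. split.
    + rewrite <- Rinv_1. apply Rinv_lt_contravar; lra.
    + unfold dl'. rewrite E2, E4. fold (dl a j). rewrite Hd. field. lra.
Qed.

Lemma sign_help U V d d' : d * d' < 0 ->
  ((1 <= U /\ V <= -1) \/ (U <= -1 /\ 1 <= V) \/ (U = 0 /\ (1 <= V \/ V <= -1))) ->
  Rabs (U * d + V * d') >= Rabs d'.
Proof.
  intros Hdd HUV.
  assert (Hs : (0 < d /\ d' < 0) \/ (d < 0 /\ 0 < d')).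
  { destruct (Rlt_le_dec 0 d); destruct (Rlt_le_dec 0 d'); try nra. }
  unfold Rabs; destruct (Rcase_abs (U * d + V * d')); destruct (Rcase_abs d');
  destruct Hs as [[? ?]|[? ?]]; destruct HUV as [[? ?]|[[? ?]|[? [?|?]]]]; subst; nra.
Qed.

Lemma bestA a j (Hi : Irr a) (k i : Z) : (1 <= k < Qj a j)%Z ->
  Rabs (IZR k * a - IZR i) >= Rabs (dl' a j).
Proof.
  intros Hk. destruct (Inv_all a Hi j) as [H1 [H2 [H3 [H4 [H5 [H6 H7]]]]]].
  set (Q := Qj a j) in *. set (Q' := Q'j a j) in *. set (P := Pj a j) in *. set (P' := P'j a j) in *.
  assert (Huv : exists u v, k = (u * Q + v * Q')%Z /\ i = (u * P + v * P')%Z).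
  { destruct H4 as [E|E].
    - exists (i * Q' - k * P')%Z, (k * P - i * Q)%Z. split.
      + transitivity (k * (P * Q' - P' * Q))%Z; [rewrite E; ring | ring].
      + transitivity (i * (P * Q' - P' * Q))%Z; [rewrite E; ring | ring].
    - exists (- (i * Q' - k * P'))%Z, (- (k * P - i * Q))%Z. split.
      + transitivity (- k * (P * Q' - P' * Q))%Z; [rewrite E; ring | ring].
      + transitivity (- i * (P * Q' - P' * Q))%Z; [rewrite E; ring | ring]. }
  destruct Huv as [u [v [Ek Ei]]].
  assert (Hr : IZR k * a - IZR i = IZR u * dl a j + IZR v * dl' a j).
  { unfold dl, dl'. fold Q Q' P P'. rewrite Ek, Ei. rewrite !plus_IZR, !mult_IZR. ring. }
  rewrite Hr. apply sign_help.
  - rewrite H7. assert (0 < dl a j * dl a j) by (apply Rsqr_pos_lt; auto). nra.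
  - assert (HUV : ((1 <= u /\ v <= -1) \/ (u <= -1 /\ 1 <= v) \/ (u = 0 /\ (1 <= v \/ v <= -1)))%Z).
    { destruct (Z.eq_dec v 0). { subst v. exfalso. destruct (Z_lt_le_dec 0 u).
        - assert (u * Q >= Q)%Z by nia. lia.
        - assert (u * Q <= 0)%Z by nia. lia. }
      destruct (Z.eq_dec u 0). { right; right; split; [auto|lia]. }
      destruct (Z_lt_le_dec 0 u); destruct (Z_lt_le_dec 0 v).
      - exfalso. assert (u * Q >= Q)%Z by nia. assert (v * Q' >= 0)%Z by nia. lia.
      - left; lia.
      - right; left; lia.
      - exfalso. assert (u * Q <= - Q)%Z by nia. assert (v * Q' <= 0)%Z by nia. lia. }
    destruct HUV as [[A B]|[[A B]|[A [B|B]]]].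
    + left; split; [apply IZR_le in A|apply IZR_le in B]; auto.
    + right; left; split; [apply IZR_le in A|apply IZR_le in B]; auto.
    + right; right; split; [subst; auto|left; apply IZR_le in B; auto].
    + right; right; split; [subst; auto|right; apply IZR_le in B; auto].
Qed.

Lemma boundC a j (Hi : Irr a) : Rabs (dl' a j) >= / (2 * IZR (Qj a j)).
Proof.
  destruct (Inv_all a Hi j) as [H1 [H2 [H3 [H4 [H5 [H6 H7]]]]]].
  assert (E : IZR (Qj a j) * dl' a j - IZR (Q'j a j) * dl a j = 1 \/
              IZR (Qj a j) * dl' a j - IZR (Q'j a j) * dl a j = -1).
  { unfold dl, dl'. destruct H4 as [E|E]; [left|right];
    [replace 1 with (IZR 1) by reflexivity|replace (-1) with (IZR (-1)) by reflexivity];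
    rewrite <- E; rewrite !minus_IZR, !mult_IZR; ring. }
  apply IZR_le in H1. apply IZR_le in H2. apply IZR_le in H3.
  set (q := IZR (Qj a j)) in *. set (q' := IZR (Q'j a j)) in *.
  set (d := dl a j) in *. set (d' := dl' a j) in *. set (x := cf_rem a (S j)) in *.
  assert (Hlt : Rabs d < Rabs d').
  { rewrite H7, Rabs_mult, Rabs_Ropp. rewrite (Rabs_right x) by lra.
    assert (0 < Rabs d) by (apply Rabs_pos_lt; auto). nra. }
  assert (Hsum : 1 <= 2 * q * Rabs d').
  { assert (Hdd : d * d' < 0).
    { rewrite H7. assert (0 < d * d) by (apply Rsqr_pos_lt; auto). nra. }
    simpl in H1, H2.
    revert Hlt; unfold Rabs; destruct (Rcase_abs d); destruct (Rcase_abs d'); intros; nra. }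
  simpl in H1. apply Rle_ge. rewrite <- (Rinv_inv (Rabs d')).
  apply Rinv_le_contravar.
  - apply Rinv_0_lt_compat. pose proof (Rabs_pos d). lra.
  - assert (0 < Rabs d') by (pose proof (Rabs_pos d); lra).
    apply (Rmult_le_reg_r (Rabs d')); auto. rewrite Rinv_l by lra. lra.
Qed.

Lemma distZ_ex x : exists i, distZ x = Rabs (x - IZR i).
Proof.
  destruct (base_Int_part x) as [B1 B2]. unfold distZ.
  apply Rmin_case_strong; intros.
  - exists (Int_part x). rewrite Rabs_right; lra.
  - exists (Int_part x + 1)%Z. rewrite plus_IZR. rewrite Rabs_left1; simpl; lra.
Qed.

Lemma distZ_ge x d : (forall i, Rabs (x - IZR i) >= d) -> distZ x >= d.
Proof. intros H. destruct (distZ_ex x) as [i E]. rewrite E. apply H. Qed.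

Lemma G_inv (a L B t : R) (n q : nat) :
  0 < L -> L <= t -> 0 < B ->
  (forall k, (1 <= k <= n)%nat -> distZ (INR k * a) >= B) ->
  (forall k, (1 <= k <= n)%nat -> distZ (INR k * a) < t -> (q <= k)%nat) ->
  (forall k k', (1 <= k)%nat -> (k < k')%nat -> (k' <= n)%nat ->
     distZ (INR k * a) < t -> distZ (INR k' * a) < t -> (q <= k' - k)%nat) ->
  forall m, (m <= n)%nat -> exists c, (c <= m)%nat /\ Dprod a m >= L^(m-c) * B^c /\
    (c = 0%nat \/ exists l, (1 <= l <= m)%nat /\ (c * q <= l)%nat /\ distZ (INR l * a) < t).
Proof.
  intros HL HLt HB H1 H2 H3 m. induction m as [|m IH]; intros Hm.
  - exists 0%nat. simpl. split; [lia|]. split; [lra|auto].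
  - destruct IH as [c [Hc [HD Hl]]]; [lia|].
    assert (Hpos : 0 < L ^ (m - c) * B ^ c) by (apply Rmult_lt_0_compat; apply pow_lt; auto).
    assert (HB' := H1 (S m) ltac:(lia)).
    change (Dprod a (S m)) with (Dprod a m * distZ (INR (S m) * a)).
    destruct (Rlt_le_dec (distZ (INR (S m) * a)) t) as [Hs|Hns].
    + exists (S c). split; [lia|]. split.
      * replace (S m - S c)%nat with (m - c)%nat by lia. simpl pow.
        apply Rle_ge. replace (L ^ (m - c) * (B * B ^ c)) with ((L ^ (m - c) * B ^ c) * B) by ring.
        apply Rmult_le_compat; lra.
      * right. exists (S m). split; [lia|]. split; [|auto].
        destruct Hl as [E|[l [Hl1 [Hl2 Hl3]]]].
        -- subst c. specialize (H2 (S m) ltac:(lia) Hs). lia.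
        -- specialize (H3 l (S m) ltac:(lia) ltac:(lia) Hm Hl3 Hs). nia.
    + exists c. split; [lia|]. split.
      * replace (S m - c)%nat with (S (m - c)) by lia. simpl pow.
        apply Rle_ge. replace (L * L ^ (m - c) * B ^ c) with ((L ^ (m - c) * B ^ c) * L) by ring.
        apply Rmult_le_compat; lra.
      * destruct Hl as [E|[l [Hl1 [Hl2 Hl3]]]]; [left; auto|right; exists l; split; [lia|auto]].
Qed.

Lemma G (a L B t : R) (n q : nat) :
  0 < L -> L <= t -> 0 < B ->
  (forall k, (1 <= k <= n)%nat -> distZ (INR k * a) >= B) ->
  (forall k, (1 <= k <= n)%nat -> distZ (INR k * a) < t -> (q <= k)%nat) ->
  (forall k k', (1 <= k)%nat -> (k < k')%nat -> (k' <= n)%nat ->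
     distZ (INR k * a) < t -> distZ (INR k' * a) < t -> (q <= k' - k)%nat) ->
  forall m, (m <= n)%nat -> exists c, (c <= m)%nat /\ (c * q <= m)%nat /\ Dprod a m >= L^(m-c) * B^c.
Proof.
  intros HL HLt HB H1 H2 H3 m Hm.
  destruct (G_inv a L B t n q HL HLt HB H1 H2 H3 m Hm) as [c [Hc [HD Hl]]].
  exists c. split; [auto|]. split; [|auto].
  destruct Hl as [E|[l [? [? ?]]]]; [subst; lia|lia].
Qed.

Lemma final_ineq (n c : nat) (qr Qb : R) :
  2 <= INR n -> (c <= n)%nat -> INR c * qr <= INR n -> 1 <= qr -> 1 <= Qb ->
  (/ (4 * INR n)) ^ (n - c) * (/ (2 * Qb)) ^ c >=
  / 2 ^ n * / (INR n) ^ (2 * n) * Rpower Qb (- (INR n / qr)).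
Proof.
  intros HX Hc Hcq Hq HQ. set (X := INR n) in *. set (d := (n - c)%nat).
  assert (Hn : n = (d + c)%nat) by (unfold d; lia).
  assert (HR : Rpower Qb (- (X / qr)) <= / Qb ^ c).
  { rewrite <- Rpower_pow by lra. rewrite <- Rpower_Ropp. apply Rle_Rpower; auto.
    apply Ropp_le_contravar. apply (Rmult_le_reg_r qr); [lra|].
    unfold Rdiv. rewrite Rmult_assoc, Rinv_l by lra. lra. }
  assert (P1 : 0 < 2 ^ n) by (apply pow_lt; lra).
  assert (P2 : 0 < X ^ (2 * n)) by (apply pow_lt; lra).
  assert (P3 : 0 < Qb ^ c) by (apply pow_lt; lra).
  assert (P4 : 0 < (2 * X) ^ d) by (apply pow_lt; lra).
  rewrite !pow_inv.
  assert (E : (4 * X) ^ d * (2 * Qb) ^ c = 2 ^ n * ((2 * X) ^ d * Qb ^ c)).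
  { rewrite Hn, pow_add, !Rpow_mult_distr. replace 4 with (2 * 2) by ring.
    rewrite Rpow_mult_distr. ring. }
  assert (K : (2 * X) ^ d <= X ^ (2 * n)).
  { rewrite Rpow_mult_distr. replace (2 * n)%nat with (n + n)%nat by lia. rewrite pow_add.
    apply Rmult_le_compat; try (apply pow_le; lra).
    - apply Rle_trans with (X ^ d); [apply pow_incr; lra | apply Rle_pow; [lra|unfold d; lia]].
    - apply Rle_pow; [lra|unfold d; lia]. }
  apply Rle_ge.
  apply Rle_trans with (/ 2 ^ n * / X ^ (2 * n) * / Qb ^ c).
  { apply Rmult_le_compat_l; [|exact HR]. left. apply Rmult_lt_0_compat; apply Rinv_0_lt_compat; auto. }
  rewrite <- !Rinv_mult. rewrite E. apply Rinv_le_contravar.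
  - apply Rmult_lt_0_compat; auto. apply Rmult_lt_0_compat; auto.
  - replace (2 ^ n * X ^ (2 * n) * Qb ^ c) with (2 ^ n * (X ^ (2 * n) * Qb ^ c)) by ring.
    apply Rmult_le_compat_l; [lra|]. apply Rmult_le_compat_r; lra.
Qed.

Theorem lemma3 (alpha : R)
  (Hirr : ~ exists (p q : Z), q <> 0%Z /\ alpha = IZR p / IZR q)
  (s n m : nat)
  (Hn : IZR (cf_q alpha s) <= INR n < IZR (cf_q alpha (S s)))
  (Hm : (m <= n)%nat) :
  Dprod alpha m * Dprod alpha (n - m) >=
    / 2 ^ n * / (INR n) ^ (2 * n)
    * Rpower (IZR (cf_q alpha (S s))) (- (INR n / IZR (cf_q alpha s))).
Proof.
  assert (Hi : Irr alpha) by exact Hirr.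
  assert (Eq : forall j, cf_q alpha j = Qj alpha j) by (intro j; unfold cf_q; rewrite cfq_eq; reflexivity).
  rewrite !Eq in *.
  destruct (Inv_all alpha Hi s) as [Hq1 _].
  destruct (Inv_all alpha Hi (S s)) as [HQ1 _].
  set (q := Qj alpha s) in *. set (Qb := Qj alpha (S s)) in *.
  set (qn := Z.to_nat q).
  assert (Eqn : q = Z.of_nat qn) by (unfold qn; lia).
  assert (Hqn : IZR q = INR qn) by (rewrite INR_IZR_INZ; congruence).
  rewrite INR_IZR_INZ in Hn. destruct Hn as [Hn1 Hn2].
  apply le_IZR in Hn1. apply lt_IZR in Hn2.
  assert (HB : forall k, (1 <= k <= n)%nat -> distZ (INR k * alpha) >= / (2 * IZR Qb)).
  { intros k Hk. apply distZ_ge. intro i. rewrite INR_IZR_INZ.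
    apply Rge_trans with (Rabs (dl' alpha (S s))); [|apply boundC; auto].
    apply bestA; auto. lia. }
  set (t := Rabs (dl' alpha s) / 2).
  assert (Ht : Rabs (dl' alpha s) >= / (2 * IZR q)) by (apply boundC; auto).
  assert (Hqpos : 0 < IZR q) by (apply IZR_lt; lia).
  assert (Htpos : 0 < Rabs (dl' alpha s)).
  { apply Rlt_le_trans with (/ (2 * IZR q)); [|lra]. apply Rinv_0_lt_compat. lra. }
  assert (Hsm : forall k : Z, (1 <= k < q)%Z -> forall i, Rabs (IZR k * alpha - IZR i) >= 2 * t).
  { intros k Hk i. unfold t. replace (2 * (Rabs (dl' alpha s) / 2)) with (Rabs (dl' alpha s)) by field.
    apply bestA; auto. }
  assert (H2 : forall k, (1 <= k <= n)%nat -> distZ (INR k * alpha) < t -> (qn <= k)%nat).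
  { intros k Hk Hd. destruct (le_lt_dec qn k) as [|Hlt]; [auto|exfalso].
    destruct (distZ_ex (INR k * alpha)) as [i Ei].
    assert (Hx := Hsm (Z.of_nat k) ltac:(lia) i). rewrite <- INR_IZR_INZ in Hx.
    unfold t in *. lra. }
  assert (H3 : forall k k', (1 <= k)%nat -> (k < k')%nat -> (k' <= n)%nat ->
     distZ (INR k * alpha) < t -> distZ (INR k' * alpha) < t -> (qn <= k' - k)%nat).
  { intros k k' Hk Hkk Hk' Hd Hd'. destruct (le_lt_dec qn (k' - k)) as [|Hlt]; [auto|exfalso].
    destruct (distZ_ex (INR k * alpha)) as [i Ei].
    destruct (distZ_ex (INR k' * alpha)) as [i' Ei'].
    assert (Hx := Hsm (Z.of_nat (k' - k)) ltac:(lia) (i' - i)%Z).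
    rewrite <- INR_IZR_INZ, minus_INR, minus_IZR in Hx by lia.
    replace ((INR k' - INR k) * alpha - (IZR i' - IZR i)) with
      ((INR k' * alpha - IZR i') - (INR k * alpha - IZR i)) in Hx by ring.
    pose proof (Rabs_triang (INR k' * alpha - IZR i') (- (INR k * alpha - IZR i))).
    rewrite Rabs_Ropp in H. unfold Rminus at 1 in Hx. lra. }
  assert (HnR : IZR q <= INR n) by (rewrite Hqn; apply le_INR; lia).
  assert (HQR : INR n < IZR Qb) by (rewrite INR_IZR_INZ; apply IZR_lt; lia).
  assert (Hn1R : 1 <= INR n) by (pose proof (IZR_le 1 q ltac:(lia)); lra).
  set (L := / (4 * INR n)).
  assert (HL : 0 < L) by (apply Rinv_0_lt_compat; lra).
  assert (HLt : L <= t).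
  { unfold t, L. apply Rle_trans with (/ (2 * IZR q) / 2); [|lra].
    unfold Rdiv. rewrite <- Rinv_mult. apply Rinv_le_contravar; lra. }
  assert (HBpos : 0 < / (2 * IZR Qb)) by (apply Rinv_0_lt_compat; lra).
  destruct (G alpha L (/ (2 * IZR Qb)) t n qn HL HLt HBpos HB H2 H3 m Hm) as [c1 [Hc1 [Hcq1 HD1]]].
  destruct (G alpha L (/ (2 * IZR Qb)) t n qn HL HLt HBpos HB H2 H3 (n - m) ltac:(lia))
    as [c2 [Hc2 [Hcq2 HD2]]].
  assert (Hprod : Dprod alpha m * Dprod alpha (n - m) >= L ^ (n - (c1 + c2)) * (/ (2 * IZR Qb)) ^ (c1 + c2)).
  { replace (n - (c1 + c2))%nat with ((m - c1) + (n - m - c2))%nat by lia.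
    rewrite !pow_add.
    assert (0 < L ^ (m - c1) * (/ (2 * IZR Qb)) ^ c1) by (apply Rmult_lt_0_compat; apply pow_lt; auto).
    assert (0 < L ^ (n - m - c2) * (/ (2 * IZR Qb)) ^ c2) by (apply Rmult_lt_0_compat; apply pow_lt; auto).
    apply Rle_ge.
    replace (L ^ (m - c1) * L ^ (n - m - c2) * ((/ (2 * IZR Qb)) ^ c1 * (/ (2 * IZR Qb)) ^ c2))
      with ((L ^ (m - c1) * (/ (2 * IZR Qb)) ^ c1) * (L ^ (n - m - c2) * (/ (2 * IZR Qb)) ^ c2)) by ring.
    apply Rmult_le_compat; lra. }
  destruct (Rle_lt_dec 2 (INR n)) as [Hn2R|Hn2R].
  - apply Rge_trans with (1 := Hprod). unfold L.
    apply final_ineq; auto; try lia.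
    + rewrite Hqn, <- mult_INR. apply le_INR. nia.
    + rewrite Hqn. assert (1 <= qn)%nat by lia. apply (le_INR 1) in H. simpl in H. lra.
    + assert (HQ := IZR_le 1 Qb ltac:(lia)). simpl in HQ. lra.
  -
    assert (En : n = 1%nat).
    { destruct n as [|[|n']]; [simpl in Hn1R; lra|reflexivity|].
      exfalso. rewrite !S_INR in Hn2R. pose proof (pos_INR n'). lra. }
    subst n. assert (Eq1 : q = 1%Z) by lia. rewrite Eq1.
    assert (Hd : Dprod alpha m * Dprod alpha (1 - m) = distZ (INR 1 * alpha)).
    { destruct m as [|[|m']]; simpl; try lia; ring. }
    rewrite Hd. replace (INR 1 / IZR 1) with 1 by (simpl; field).
    rewrite Rpower_Ropp, Rpower_1 by lra.
    apply Rge_trans with (/ (2 * IZR Qb)); [apply HB; lia|].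
    simpl. rewrite Rinv_mult. lra.
Qed.
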